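(* Let $q$ be an odd prime, $n \geq 1$ an integer, $v = 3q^n$, and $k$ an odd positive integer. If there are integers $a_1, \ldots, a_k$ with $1 \leq a_j < v$ such that $\prod_{j=1}^k a_j = \prod_{j=1}^k (v - a_j)$, then there is an integer $m$ such that $2^m \equiv (-1)^{m+1} \pmod q$.
   Context: For a negative integer $m$, $2^m$ is understood in $\mathbb{Z}/q\mathbb{Z}$ as the $|m|$-th power of the multiplicative inverse of $2$ modulo $q$. *)

(* Defs.v *)
From mathcomp Require Import all_boot all_order all_algebra.
Set Implicit Arguments. Unset Strict Implicit. Unset Printing Implicit Defensive.

(* Main.v *)
Require Import Defs.
From mathcomp Require Import all_boot all_order all_algebra.
From mathcomp Require Import ring.
Import GRing.Theory Num.Theory.
Local Open Scope ring_scope.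

Lemma natF0 (q x : nat) : prime q -> ((x%:R : 'F_q) == 0) = (q %| x)%N.
Proof. by move=> pq; rewrite (dvdn_pcharf (pchar_Fp pq)). Qed.

Lemma elem (q n x : nat) : prime q -> odd q -> (1 <= n)%N -> (1 <= x)%N ->
  (x < 3 * q ^ n)%N ->
  exists e b c : nat, exists m : int,
   [/\ x = (b * q ^ e)%N, (3 * q ^ n - x = c * q ^ e)%N, ~~ (q %| b)%N &
       (c%:R : 'F_q) = - (-2) ^ m * b%:R].
Proof.
move=> pq oq n1 x1 xlt.
have [b cb xE] := pfactor_coprime pq x1.
set e := logn q x in xE.
have q1 : (1 < q)%N := prime_gt1 pq.
have ndb : ~~ (q %| b)%N by rewrite -prime_coprime // coprime_sym.
have q2 : ~~ (q %| 2)%N.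
  apply/negP=> /(dvdn_leq (isT : (0 < 2)%N)); rewrite leq_eqVlt => /orP[/eqP q2|]; first by rewrite q2 in oq.
  by rewrite ltnS leqNgt q1.
case: (ltnP e n) => [en|ne].
- have nE : n = (n - e + e)%N by rewrite subnK // ltnW.
  exists e, b, (3 * q ^ (n - e) - b)%N, 0; split => //.
  + rewrite xE {1}nE expnD mulnA -mulnBl //.
  + have hb : (b <= 3 * q ^ (n - e))%N.
      have qe : (0 < q ^ e)%N by rewrite expn_gt0 prime_gt0.
      by rewrite -(leq_pmul2r qe) -mulnA -expnD -nE -xE ltnW.
    rewrite natrB // natrM natrX.
    have -> : (q%:R : 'F_q) = 0 by apply/eqP; rewrite natF0.
    rewrite expr0n subn_eq0 leqNgt en /= mulr0 expr0z sub0r mulN1r //.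
- have bpos : (0 < b)%N by rewrite lt0n; apply/negP=> /eqP b0; rewrite xE b0 in x1.
  have q3 : (3 <= q)%N by case: q oq q1 {pq cb xE xlt ndb q2 e ne} => [|[|[|]]].
  have qn : (0 < q ^ n)%N by rewrite expn_gt0 prime_gt0.
  have eE : e = n.
    apply/eqP; rewrite eqn_leq ne andbT leqNgt; apply/negP=> ne'.
    have : (3 * q ^ n <= x)%N.
      apply: (leq_trans (leq_mul q3 (leqnn _))).
      rewrite -expnS xE; apply: (leq_trans _ (leq_mul bpos (leqnn _))).
      by rewrite mul1n (leq_pexp2l (ltnW q1) ne').
    by rewrite leqNgt xlt.
  rewrite eE in xE.
  have b3 : (b < 3)%N by rewrite -(ltn_pmul2r qn) -xE.
  have twoF : (2%:R : 'F_q) != 0 by rewrite natF0.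
  case: b bpos b3 xE {cb ndb} => [|[|[|]]] // _ _ xE.
  + exists n, 1%N, 2%N, 1; split => //.
    * by rewrite xE mul1n -{2}(mul1n (q ^ n)%N) -mulnBl.
    * by rewrite dvdn1 neq_ltn q1 orbT.
    * by rewrite expr1z; ring.
  + exists n, 2%N, 1%N, (-1); split => //.
    * by rewrite xE -mulnBl.
    * by rewrite exprN1; field; rewrite oppr_eq0.
Qed.

(* 2^m and (-1)^(m+1) are computed in 'F_q (q prime) with integer exponent m;
   for m < 0, 2^m is the |m|-th power of the inverse of 2 modulo q. *)
Theorem lemma4p11 (q n k : nat) (a : 'I_k -> nat) :
  prime q -> odd q -> (1 <= n)%N -> odd k ->
  (forall j, (1 <= a j)%N /\ (a j < 3 * q ^ n)%N) ->
  (\prod_(j < k) a j = \prod_(j < k) (3 * q ^ n - a j))%N ->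
  exists m : int, (2%:R : 'F_q) ^ m = (-1) ^ (m + 1).
Proof.
move=> pq oq n1 ok ha hprod.
have : forall j : 'I_k, exists t : nat * nat * nat * int,
   [/\ a j = (t.1.1.2 * q ^ t.1.1.1)%N, (3 * q ^ n - a j = t.1.2 * q ^ t.1.1.1)%N,
       ~~ (q %| t.1.1.2)%N & (t.1.2%:R : 'F_q) = - (-2) ^ t.2 * t.1.1.2%:R].
  move=> j; have [h1 h2] := ha j.
  have [e [b [c [m H]]]] := elem q n (a j) pq oq n1 h1 h2.
  by exists (e, b, c, m).
case/fin_all_exists => f hf.
pose e j := (f j).1.1.1. pose b j := (f j).1.1.2.
pose c j := (f j).1.2. pose m j := (f j).2.
have hA : forall j, a j = (b j * q ^ e j)%N by move=> j; case: (hf j).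
have hC : forall j, (3 * q ^ n - a j = c j * q ^ e j)%N by move=> j; case: (hf j).
have hP : (\prod_(j < k) b j = \prod_(j < k) c j)%N.
  have P0 : (0 < \prod_(j < k) q ^ e j)%N.
    by apply: prodn_gt0 => j; rewrite expn_gt0 prime_gt0.
  apply/eqP; rewrite -(eqn_pmul2r P0) -!big_split /=.
  by rewrite -(eq_bigr _ (fun j _ => hA j)) -(eq_bigr _ (fun j _ => hC j)) hprod.
have hB : (\prod_(j < k) (b j)%:R : 'F_q) != 0.
  by apply/prodf_neq0 => j _; rewrite natF0 //; case: (hf j).
have key : (\prod_(j < k) (c j)%:R : 'F_q)
    = (\prod_(j < k) (- (-2) ^ (m j))) * \prod_(j < k) (b j)%:R.
  by rewrite -big_split; apply: eq_bigr => j _; case: (hf j).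
have q1 : (1 < q)%N := prime_gt1 pq.
have nz2 : (-2 : 'F_q) != 0.
  rewrite oppr_eq0 natF0 //; apply/negP=> /(dvdn_leq (isT : (0 < 2)%N)).
  rewrite leq_eqVlt => /orP[/eqP q2|]; first by rewrite q2 in oq.
  by rewrite ltnS leqNgt q1.
have hM : \prod_(j < k) (- (-2 : 'F_q) ^ (m j)) = - (-2) ^ (\sum_(j < k) m j).
  rewrite prodrN card_ord -signr_odd ok expr1 mulN1r.
  by rewrite (big_morph (fun x : int => (-2 : 'F_q) ^ x) (fun x y => expfzDr x y nz2) (expr0z _)).
rewrite -!natr_prod -hP !natr_prod hM in key.
set M := (\sum_(j < k) m j) in key.
have hM2 : (-2 : 'F_q) ^ M = -1.
  by apply: (mulIf hB); rewrite mulN1r {2}key mulNr opprK.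
exists M.
have m1 : (-1 : 'F_q) != 0 by rewrite oppr_eq0 oner_eq0.
have sq : (-1 : 'F_q) ^ M * (-1) ^ M = 1.
  by rewrite -expfzMl mulN1r opprK exp1rz.
have h2 : (-1 : 'F_q) ^ M * 2%:R ^ M = -1.
  by rewrite -expfzMl mulN1r.
rewrite expfzDr // expr1z.
have e1 : (2%:R : 'F_q) ^ M = (-1) ^ M * ((-1) ^ M * 2%:R ^ M) by rewrite mulrA sq mul1r.
by rewrite e1 h2.
Qed.
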